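(* Let $n$ be a positive odd integer. Then $$ \sum_{k=0}^{n-1}\frac{(aq;q^2)_k\,(q/a;q^2)_k}{(q^2;q^2)_k^2}\,q^{2k} \equiv (-1)^{(n-1)/2}q^{(n^2-1)/4}\pmod{(1-aq^n)(a-q^n)}. $$
   Context: $a,q$ are indeterminates. The $q$-shifted factorial is $(y;q)_0=1$ and $(y;q)_m=(1-y)(1-yq)\cdots(1-yq^{m-1})$ for $m\geqslant1$. For rational functions $A,B$ and a polynomial $P$, $A\equiv B\pmod P$ means $A-B=P\cdot C/D$ for polynomials $C,D$ with $D$ coprime to $P$. *)

(* Defs.v *)
(* Q[a,q] is modelled as {poly {poly rat}}:
   q = inner variable (constant polynomial 'X%:P), a = outer variable 'X.
   Rational functions in a,q = {fraction Rq} (fraction field of Q[a,q]). *)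
From HB Require Import structures.
From mathcomp Require Import all_boot all_order all_algebra.
Set Implicit Arguments. Unset Strict Implicit. Unset Printing Implicit Defensive.
Import Order.TTheory GRing.Theory Num.Theory.
Local Open Scope ring_scope.

Definition Rq := {poly {poly rat}}.
Definition RF := {fraction Rq}.

Notation "x %:F" := (@FracField.tofrac Rq x) (format "x %:F") : ring_scope.

Definition qv : Rq := ('X : {poly rat})%:P.
Definition av : Rq := 'X.

Definition qpoch (K : comNzRingType) (y q : K) (m : nat) : K :=
  \prod_(j < m) (1 - y * q ^+ j).

Definition dvdR (g x : Rq) : Prop := exists h : Rq, x = h * g.
Definition coprimeR (x y : Rq) : Prop :=
  forall g : Rq, dvdR g x -> dvdR g y -> g \is a GRing.unit.

Definition qcong (A B : RF) (P : Rq) : Prop :=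
  exists C D : Rq, D != 0 /\ coprimeR D P /\ A - B = P%:F * C%:F / D%:F.

(* Main.v *)
Require Import Defs.
From HB Require Import structures.
From mathcomp Require Import all_boot all_order all_algebra.
From mathcomp Require Import ring zify.
Set Implicit Arguments. Unset Strict Implicit. Unset Printing Implicit Defensive.
Import Order.TTheory GRing.Theory Num.Theory.
Local Open Scope ring_scope.


Section QP.
Variable K : fieldType.

Lemma qpochS (y p : K) k : qpoch y p k.+1 = qpoch y p k * (1 - y * p ^+ k).
Proof. by rewrite /qpoch big_ord_recr. Qed.

Lemma qpochSl (y p : K) k : qpoch y p k.+1 = (1 - y) * qpoch (y * p) p k.
Proof.
rewrite /qpoch big_ord_recl expr0 mulr1; congr (_ * _); apply: eq_bigr => i _.
by rewrite /bump /= exprS mulrA.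
Qed.

Lemma key_id (p b y z u E F Bk Pk : K) : z * p = y -> F * (1 - z * u) = (1 - z) * E ->
  p != 0 -> u != 0 -> Pk != 0 -> 1 - p * u != 0 -> 1 - z * u != 0 -> p - y != 0 -> y - p != 0 ->
  Bk * F * u / Pk ^+ 2 - (b * y - p) / (y - p) * (Bk * E * u / Pk ^+ 2) =
  (- (y * p) / (p - y) ^+ 2) * (1 - p * u) ^+ 2 / (p * u) *
     (Bk * (1 - b * u) * ((1 - z) * E) * (p * u) / (Pk * (1 - p * u)) ^+ 2)
  - (- (y * p) / (p - y) ^+ 2) * (1 - u) ^+ 2 / u * (Bk * F * u / Pk ^+ 2).
Proof.
move=> hy hF hp hu hP h1 h2 h3 h4.
have -> : F = (1 - z) * E / (1 - z * u) by rewrite -hF mulfK.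
rewrite -hy in h3 h4 *.
field.
by rewrite h1 h2 h3 h4 hP hp hu.
Qed.
End QP.

Section CV.
Variables (K : fieldType) (p b : K).
Hypotheses (hp0 : p != 0) (hpn : forall i, (0 < i)%N -> p ^+ i != 1).

Lemma one_sub_pow_neq0 i : (0 < i)%N -> 1 - p ^+ i != 0.
Proof. by move=> hi; rewrite subr_eq0 eq_sym hpn. Qed.

Lemma qpp_neq0 k : qpoch p p k != 0.
Proof.
elim: k => [|k IH]; first by rewrite /qpoch big_ord0 oner_neq0.
by rewrite qpochS mulf_neq0 // -exprS one_sub_pow_neq0.
Qed.

Lemma qpoch_van m k : (m < k)%N -> qpoch (p ^+ m)^-1 p k = 0.
Proof.
elim: k => // k IH; rewrite ltnS leq_eqVlt qpochS => /orP [/eqP <-| /IH ->].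
  by rewrite mulVf ?expf_neq0 // subrr mulr0.
by rewrite mul0r.
Qed.

Definition tt m k := qpoch b p k * qpoch (p ^+ m)^-1 p k * p ^+ k / (qpoch p p k) ^+ 2.

Lemma CV m : \sum_(k < m.+1) tt m k = (\prod_(j < m) (b - p ^+ j.+1)) / qpoch p p m.
Proof.
elim: m => [|m IH].
  by rewrite big_ord1 /tt /qpoch !big_ord0 expr0 !mulr1 expr1n invr1.
set y := (p ^+ m)^-1; set z := (p ^+ m.+1)^-1.
have hzp : z * p = y by rewrite /z /y exprSr invfM mulrVK // unitfE.
have hpm : p ^+ m != 0 by rewrite expf_neq0.
have hpy : p - y != 0.
  rewrite /y subr_eq0; apply/eqP => h.
  by move: (hpn (ltn0Sn m)); rewrite exprS {1}h mulVf ?eqxx.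
have hyp : y - p != 0 by rewrite -opprB oppr_eq0.
pose lam : K := (b * y - p) / (y - p).
pose al : K := - (y * p) / (p - y) ^+ 2.
pose G (k : nat) : K := al * (1 - p ^+ k) ^+ 2 / p ^+ k * tt m.+1 k.
have step : forall k, (k <= m)%N -> tt m.+1 k - lam * tt m k = G k.+1 - G k.
  move=> k hk.
  rewrite /G /tt /lam /al -/y -/z.
  rewrite (qpochSl z p k) hzp !qpochS [p ^+ k.+1]exprS.
  have hF : qpoch z p k * (1 - z * p ^+ k) = (1 - z) * qpoch y p k.
    by rewrite -qpochS qpochSl hzp.
  have hzu : 1 - z * p ^+ k != 0.
    rewrite subr_eq0; apply/negP => /eqP h.
    have h1 : p ^+ k = p ^+ m.+1.
      have : p ^+ m.+1 * (z * p ^+ k) = p ^+ m.+1 by rewrite -h mulr1.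
      by rewrite mulrA /z mulfV ?expf_neq0 // mul1r.
    have hk1 : (0 < m.+1 - k)%N by rewrite subn_gt0 ltnS.
    move: (hpn hk1); apply/negP; rewrite negbK; apply/eqP.
    apply: (mulfI (expf_neq0 k hp0)); rewrite -exprD subnKC ?h1 ?mulr1 //.
    exact: leqW.
  apply: key_id => //; rewrite ?expf_neq0 ?qpp_neq0 // -exprS one_sub_pow_neq0 //.
have tel : \sum_(k < m.+1) (tt m.+1 k - lam * tt m k) = G m.+1 - G 0%N.
  rewrite -(big_mkord xpredT (fun k => tt m.+1 k - lam * tt m k)).
  by apply: telescope_sumr_eq => // k /andP [_ hk]; apply: step.
have G0 : G 0%N = 0 by rewrite /G expr0 subrr expr0n /= !mulr0 !mul0r.
have Gm : G m.+1 = - tt m.+1 m.+1.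
  have hc : al * (1 - p ^+ m.+1) ^+ 2 / p ^+ m.+1 = -1.
    have h1 : 1 - p * p ^+ m != 0 by rewrite -exprS one_sub_pow_neq0.
    rewrite /al /y [p ^+ m.+1]exprS; move: hpy; rewrite /y => hpy'.
    by field; rewrite hpm hp0 /= -exprS subr_eq0 hpn.
  by rewrite /G hc mulN1r.
rewrite big_ord_recr /=.
move: tel; rewrite sumrB -mulr_sumr IH G0 subr0 Gm => /eqP.
rewrite subr_eq => /eqP ->.
rewrite addrC addNKr big_ord_recr /= qpochS /lam /y.
have h1 : 1 - p * p ^+ m != 0 by rewrite -exprS one_sub_pow_neq0.
move: hyp; rewrite /y => hyp'.
rewrite exprS; field.
by rewrite h1 hpm qpp_neq0.
Qed.
End CV.

Section CVq.
Variables (K : fieldType) (q : K).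
Hypotheses (hq0 : q != 0) (hqn : forall i, (0 < i)%N -> (q ^+ 2) ^+ i != 1).

Lemma prod_pow_lem m : \prod_(j < m) (q ^+ 2) ^+ j.+1 = q ^+ (m * m.+1).
Proof.
elim: m => [|m IH]; first by rewrite big_ord0 expr0.
rewrite big_ord_recr /= IH -exprM -exprD; congr (_ ^+ _).
by rewrite !mulSn !mulnS; lia.
Qed.

Lemma prod_lem m : \prod_(j < m) ((q ^+ 2) ^+ m.+1 - (q ^+ 2) ^+ j.+1) =
  (-1) ^+ m * q ^+ (m * m.+1) * qpoch (q ^+ 2) (q ^+ 2) m.
Proof.
set p := q ^+ 2.
have -> : \prod_(j < m) (p ^+ m.+1 - p ^+ j.+1) =
    \prod_(j < m) ((-1) * p ^+ j.+1 * (1 - p ^+ (m - j))).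
  apply: eq_bigr => j _.
  have hj : (j.+1 + (m - j) = m.+1)%N by have := ltn_ord j; lia.
  by rewrite -{1}hj exprD; ring.
rewrite !big_split /= prodr_const card_ord prod_pow_lem.
congr (_ * _); rewrite /qpoch (reindex_inj rev_ord_inj) /=.
apply: eq_bigr => j _; rewrite -exprS.
by have := ltn_ord j; move=> hj; congr (1 - p ^+ _); lia.
Qed.

Lemma CVq m : 
  \sum_(k < m.*2.+1) qpoch (q ^+ m.*2.+1 * q) (q ^+ 2) k * qpoch (q / q ^+ m.*2.+1) (q ^+ 2) k
     / (qpoch (q ^+ 2) (q ^+ 2) k) ^+ 2 * q ^+ (2 * k)
  = (-1) ^+ m * q ^+ (m * m.+1).
Proof.
set p := q ^+ 2.
have hp0 : p != 0 by rewrite expf_neq0.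
have e1 : q ^+ m.*2.+1 * q = p ^+ m.+1 by rewrite -exprSr -exprM; congr (_ ^+ _); lia.
have e2 : q / q ^+ m.*2.+1 = (p ^+ m)^-1.
  by rewrite exprSr invfM mulrCA mulfV // mulr1 -exprM -mul2n.
rewrite e1 e2.
have -> : \sum_(k < m.*2.+1) qpoch (p ^+ m.+1) p k * qpoch (p ^+ m)^-1 p k
     / (qpoch p p k) ^+ 2 * q ^+ (2 * k) = \sum_(k < m.+1) tt p (p ^+ m.+1) m k.
  rewrite (big_ord_widen m.*2.+1 (fun k => tt p (p ^+ m.+1) m k)); last by lia.
  rewrite [RHS]big_mkcond /=; apply: eq_bigr => k _.
  case: ifP => hk; first by rewrite /tt exprM mulrAC.
  rewrite qpoch_van ?mulr0 ?mul0r //; first by lia.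
rewrite CV // prod_lem mulfK // qpp_neq0 //.
Qed.
End CVq.


Definition F := {fraction {poly rat}}.
Notation "x %:G" := (@FracField.tofrac {poly rat} x) (at level 2, format "x %:G").
Definition qF : F := ('X : {poly rat})%:G.

Lemma evP (x : F) : commr_rmorph (@FracField.tofrac {poly rat}) x.
Proof. by move=> a; rewrite /GRing.comm mulrC. Qed.

Notation ev x := (horner_morph (evP x)).

Lemma ev_av x : ev x av = x.
Proof. exact: horner_morphX. Qed.
Lemma ev_C x c : ev x c%:P = c%:G.
Proof. exact: horner_morphC. Qed.
Lemma ev_qv x : ev x qv = qF.
Proof. exact: horner_morphC. Qed.
Lemma test x (r s : Rq) : ev x (r * s - 1) = ev x r * ev x s - 1.
Proof. by rewrite rmorphB rmorphM rmorph1. Qed.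

Section Gen.
Variable n : nat.
Definition Bexpr (K : comNzRingType) (q : K) :=
  (-1) ^+ ((n - 1) %/ 2) * q ^+ ((n ^ 2 - 1) %/ 4).
Definition restq (K : comNzRingType) (q : K) k :=
  \prod_(k <= j < n.-1) (1 - q ^+ 2 * (q ^+ 2) ^+ j).
Definition dd (K : comNzRingType) (q : K) := (qpoch (q ^+ 2) (q ^+ 2) n.-1) ^+ 2.
Definition Xexpr (K : comNzRingType) (a q : K) :=
  \sum_(k < n) a ^+ (n.-1 - k) * qpoch (a * q) (q ^+ 2) k
      * (\prod_(j < k) (a - q * (q ^+ 2) ^+ j)) * q ^+ (2 * k) * (restq q k) ^+ 2
  - a ^+ n.-1 * dd q * Bexpr q.
Definition Sexpr (K : fieldType) (a q : K) :=
  \sum_(k < n) qpoch (a * q) (q ^+ 2) k * qpoch (q / a) (q ^+ 2) k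
     / (qpoch (q ^+ 2) (q ^+ 2) k) ^+ 2 * q ^+ (2 * k).

Section Morph.
Variables (K1 K2 : comNzRingType) (f : {rmorphism K1 -> K2}).
Lemma qpoch_morph y p k : f (qpoch y p k) = qpoch (f y) (f p) k.
Proof.
rewrite /qpoch rmorph_prod; apply: eq_bigr => j _.
by rewrite rmorphB rmorph1 rmorphM rmorphXn.
Qed.
Lemma Xexpr_morph a q : f (Xexpr a q) = Xexpr (f a) (f q).
Proof.
rewrite /Xexpr rmorphB rmorph_sum; congr (_ - _).
  apply: eq_bigr => k _.
  rewrite !rmorphM !rmorphXn qpoch_morph rmorphXn rmorphM /restq !rmorph_prod.
  have h2 : \prod_(k <= i < n.-1) f (1 - q ^+ 2 * q ^+ 2 ^+ i) =
      \prod_(k <= j < n.-1) (1 - f q ^+ 2 * f q ^+ 2 ^+ j).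
    by apply: eq_bigr => j _; rewrite rmorphB rmorph1 rmorphM !rmorphXn.
  rewrite h2 expr2; congr (_ * _ * _ * _ * _).
  by apply: eq_bigr => j _; rewrite rmorphB rmorphM !rmorphXn expr2.
by rewrite !rmorphM !rmorphXn /dd qpoch_morph /Bexpr rmorphN rmorph1 -expr2 rmorphXn.
Qed.
End Morph.

Lemma qpoch_split (K : comNzRingType) (y p : K) k N : (k <= N)%N ->
  qpoch y p N = qpoch y p k * \prod_(k <= j < N) (1 - y * p ^+ j).
Proof.
move=> hk; rewrite /qpoch -!(big_mkord xpredT (fun j => 1 - y * p ^+ j)).
by rewrite (big_cat_nat (leq0n k) hk).
Qed.

Lemma qpoch_inv (K : fieldType) (a q : K) k : a != 0 ->
  \prod_(j < k) (a - q * (q ^+ 2) ^+ j) = a ^+ k * qpoch (q / a) (q ^+ 2) k.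
Proof.
move=> ha; elim: k => [|k IH]; first by rewrite big_ord0 /qpoch big_ord0 expr0 mulr1.
rewrite big_ord_recr /= IH qpochS [a ^+ k.+1]exprSr; field; exact: ha.
Qed.

Lemma Xexpr_eval (K : fieldType) (a q : K) : a != 0 ->
  (forall k, qpoch (q ^+ 2) (q ^+ 2) k != 0) ->
  Xexpr a q = a ^+ n.-1 * dd q * (Sexpr a q - Bexpr q).
Proof.
move=> ha hP; rewrite /Xexpr /Sexpr mulrBr mulr_sumr; congr (_ - _).
apply: eq_bigr => k _.
have hk : (k <= n.-1)%N by have := ltn_ord k; lia.
rewrite qpoch_inv // /dd (qpoch_split _ _ hk) -/(restq q k).
rewrite -{2}(subnK hk) exprD.
by field; rewrite hP.
Qed.
End Gen.

Lemma Xpow_neq1 i : (0 < i)%N -> ('X : {poly rat}) ^+ i != 1.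
Proof.
move=> hi; apply/eqP => h; have := size_polyXn rat i.
by rewrite h size_poly1 => -[] hh; move: hi; rewrite -hh.
Qed.

Lemma qF_neq0 : qF != 0.
Proof. by rewrite /qF tofrac_eq0 polyX_eq0. Qed.

Lemma qF_pow i : (0 < i)%N -> qF ^+ i != 1.
Proof. by move=> hi; rewrite /qF -rmorphXn -(rmorph1 (@FracField.tofrac {poly rat})) tofrac_eq Xpow_neq1. Qed.

Lemma qF_pow2 i : (0 < i)%N -> (qF ^+ 2) ^+ i != 1.
Proof. by move=> hi; rewrite -exprM qF_pow // muln_gt0. Qed.

Lemma qF_qpoch k : qpoch (qF ^+ 2) (qF ^+ 2) k != 0.
apply: qpp_neq0; exact: qF_pow2. Qed.

Lemma Bexpr_odd (K : comNzRingType) (q : K) m :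
  Bexpr m.*2.+1 q = (-1) ^+ m * q ^+ (m * m.+1).
Proof.
rewrite /Bexpr; congr ((-1) ^+ _ * q ^+ _).
  by rewrite subn1 /= -muln2 mulnK.
have -> : ((m.*2.+1) ^ 2 - 1 = (m * m.+1) * 4)%N.
  rewrite -!muln2 expnS expn1; lia.
by rewrite mulnK.
Qed.

Lemma Sexpr_qn m : Sexpr m.*2.+1 (qF ^+ m.*2.+1) qF = Bexpr m.*2.+1 qF.
Proof. rewrite Bexpr_odd /Sexpr CVq //; [exact: qF_neq0 | exact: qF_pow2]. Qed.

Lemma Sexpr_inv n (K : fieldType) (x q : K) : x != 0 -> Sexpr n x^-1 q = Sexpr n x q.
Proof.
move=> hx; rewrite /Sexpr; apply: eq_bigr => k _.
by rewrite invrK [x^-1 * q]mulrC [q * x]mulrC [qpoch (q / x) _ _ * _]mulrC.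
Qed.

Lemma fX_eval n (x : F) (f : {rmorphism Rq -> F}) : x != 0 -> f av = x -> f qv = qF ->
  f (Xexpr n av qv) = x ^+ n.-1 * dd n qF * (Sexpr n x qF - Bexpr n qF).
Proof.
move=> hx ha hq; rewrite (@Xexpr_morph n _ _ f). rewrite ha hq. exact: (@Xexpr_eval n F x qF hx qF_qpoch).
Qed.


Lemma ev_X n (x : F) : x != 0 ->
  ev x (Xexpr n av qv) = x ^+ n.-1 * dd n qF * (Sexpr n x qF - Bexpr n qF).
Proof. move=> hx; exact: (@fX_eval n x (ev x) hx (ev_av x) (ev_qv x)). Qed.

Lemma root_step (X : Rq) (c : {poly rat}) : ev (c%:G) X = 0 -> exists Y, X = Y * (av - c%:P).
Proof.
rewrite /horner_morph horner_map /= => /eqP; rewrite tofrac_eq0 => h.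
by apply/factor_theorem.
Qed.

Lemma lin_decomp (c : {poly rat}) (X : Rq) :
  exists d (h : {poly rat}) (W : Rq), (c%:P) ^+ d * X = h%:P + (c%:P * av - 1) * W.
Proof.
elim/poly_ind: X => [|p a [d [h [W E]]]].
  by exists 0%N, 0, 0; rewrite mulr0 mulr0 addr0.
exists d.+1, (h + c ^+ d.+1 * a), (h%:P + W * (c%:P * av)).
have -> : (c%:P) ^+ d.+1 * (p * 'X + a%:P) = c%:P * av * ((c%:P) ^+ d * p) + (c%:P) ^+ d.+1 * a%:P.
  by rewrite /av exprS; ring.
rewrite E polyCD polyCM rmorphXn; ring.
Qed.

Lemma L_step_gen (c : {poly rat}) (z : F) (f : {rmorphism Rq -> F}) (X : Rq) :
  z * c%:G = 1 -> f av = z -> (forall e, f e%:P = e%:G) -> f X = 0 ->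
  exists d (W : Rq), (c%:P) ^+ d * X = (c%:P * av - 1) * W.
Proof.
move=> hz hfa hfc hX; have [d [h [W E]]] := lin_decomp c X.
exists d, W.
have : f ((c%:P) ^+ d * X) = f (h%:P + (c%:P * av - 1) * W) by rewrite E.
rewrite rmorphM hX mulr0 rmorphD rmorphM rmorphB rmorphM rmorph1 !hfc hfa.
rewrite [_ * z]mulrC hz subrr mul0r addr0 => /esym /eqP; rewrite tofrac_eq0 => /eqP hh.
by rewrite E hh polyC0 add0r.
Qed.

Lemma L_step (c : {poly rat}) (z : F) (X : Rq) : z * c%:G = 1 -> ev z X = 0 ->
  exists d (W : Rq), (c%:P) ^+ d * X = (c%:P * av - 1) * W.
Proof.
move=> hz hX; exact: (@L_step_gen c z (ev z) X hz (ev_av z) (ev_C z) hX).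
Qed.

Section Cop.
Variable n : nat.
Let cq : {poly rat} := 'X ^+ n.
Let Pn : Rq := (1 - av * qv ^+ n) * (av - qv ^+ n).

Lemma qvn : qv ^+ n = cq%:P.
Proof. by rewrite /qv /cq rmorphXn. Qed.

Lemma Pn_coef0 : Pn`_0 = - cq.
Proof.
have -> : Pn = - cq%:P + (1 + cq ^+ 2)%:P * 'X - cq%:P * 'X ^+ 2.
  by rewrite /Pn qvn /av polyCD polyC1 !rmorphXn; ring.
by rewrite coefB coefD coefN coefC coefCM coefX coefCM coefXn /= !mulr0 subr0 addr0.
Qed.

Lemma Pn_coef1 : Pn`_1 = 1 + cq ^+ 2.
Proof.
have -> : Pn = - cq%:P + (1 + cq ^+ 2)%:P * 'X - cq%:P * 'X ^+ 2.
  by rewrite /Pn qvn /av polyCD polyC1 !rmorphXn; ring.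
by rewrite coefB coefD coefN coefC coefCM coefX coefCM coefXn /= mulr0 subr0 mulr1 oppr0 add0r.
Qed.

Lemma const_unit (g : Rq) (y : {poly rat}) : y != 0 -> dvdR g Pn -> dvdR g y%:P ->
  g \is a GRing.unit.
Proof.
move=> hy [h1 E1] [h2 E2].
have hg : g != 0 by apply: contraNneq hy => hg; move: E2; rewrite hg mulr0 => /eqP; rewrite polyC_eq0.
have hh2 : h2 != 0 by apply: contraNneq hy => hh; move: E2; rewrite hh mul0r => /eqP; rewrite polyC_eq0.
have hs : size g = 1%N.
  have h : ((size h2 + size g).-1 = 1)%N by rewrite -size_mul // -E2 size_polyC hy.
  have g1 : (0 < size g)%N by rewrite size_poly_gt0.
  have g2 : (0 < size h2)%N by rewrite size_poly_gt0.
  lia.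
have Eg : g = (g`_0)%:P by apply: size1_polyC; rewrite hs.
set c0 := g`_0 in Eg.
have hc0 : c0 \is a GRing.unit.
  apply/unitrPr; exists (h1`_1 + cq * h1`_0).
  have e0 : Pn`_0 = h1`_0 * c0 by rewrite E1 Eg coefMC.
  have e1 : Pn`_1 = h1`_1 * c0 by rewrite E1 Eg coefMC.
  move: e0 e1; rewrite Pn_coef0 Pn_coef1 => e0 e1.
  have : c0 * (h1`_1 + cq * h1`_0) = (h1`_1 * c0) + cq * (h1`_0 * c0) by ring.
  by rewrite -e0 -e1 => ->; ring.
apply/unitrPr; exists (c0^-1)%:P; by rewrite Eg -polyCM mulrV.
Qed.

Lemma cop_ind (g : Rq) k : forall y : {poly rat}, y != 0 -> dvdR g Pn ->
  dvdR g (av ^+ k * y%:P) -> g \is a GRing.unit.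
Proof.
elim: k => [|k IH] y hy hP hd.
  by apply: (const_unit hy hP); move: hd; rewrite expr0 mul1r.
apply: (IH (cq * y)); first by rewrite mulf_neq0 // expf_neq0 // polyX_eq0.
  by [].
case: hd => h1 E1; case: hP => h2 E2.
exists (h1 * (1 + cq%:P ^+ 2 - av * cq%:P) - av ^+ k * y%:P * h2).
have e : av ^+ k * (cq * y)%:P =
   av ^+ k.+1 * y%:P * (1 + cq%:P ^+ 2 - av * cq%:P) - av ^+ k * y%:P * Pn.
  by rewrite /Pn qvn polyCM exprS; ring.
by rewrite e E1 E2; ring.
Qed.
End Cop.


Lemma qvF_pow i : (0 < i)%N -> (qv%:F) ^+ i != 1.
Proof.
move=> hi; rewrite -rmorphXn -(rmorph1 (@FracField.tofrac Rq)) tofrac_eq /qv -rmorphXn -polyC1.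
by rewrite (inj_eq polyC_inj) Xpow_neq1.
Qed.

Lemma avF_neq0 : av%:F != 0.
Proof. by rewrite tofrac_eq0 /av polyX_eq0. Qed.

Lemma qvF_qpoch k : qpoch (qv%:F ^+ 2) (qv%:F ^+ 2) k != 0.
Proof. apply: qpp_neq0 => i hi; by rewrite -exprM qvF_pow // muln_gt0. Qed.

Lemma ddF n : (dd n qv)%:F = dd n (qv%:F).
Proof. by rewrite /dd rmorphXn qpoch_morph rmorphXn. Qed.

Lemma RF_eq n : (Xexpr n av qv)%:F = (av%:F) ^+ n.-1 * (dd n qv)%:F *
  (Sexpr n (av%:F) (qv%:F) - Bexpr n (qv%:F)).
Proof.
rewrite ddF (@Xexpr_morph n _ _ (@FracField.tofrac Rq)).
exact: (@Xexpr_eval n _ (av%:F) (qv%:F) avF_neq0 qvF_qpoch).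
Qed.

Lemma field_fin (K : fieldType) (x s d0 e pc : K) : x = d0 * s -> e * x = pc ->
  e != 0 -> d0 != 0 -> s = pc / (e * d0).
Proof. move=> hx hpc he hd; rewrite -hpc hx; field; by rewrite he hd. Qed.

Theorem corollary4p3 (n : nat) (hn0 : (0 < n)%N) (hodd : odd n) :
  qcong
    (\sum_(k < n)
        qpoch (av%:F * qv%:F) (qv%:F ^+ 2) k * qpoch (qv%:F / av%:F) (qv%:F ^+ 2) k
        / (qpoch (qv%:F ^+ 2) (qv%:F ^+ 2) k) ^+ 2 * qv%:F ^+ (2 * k))
    ((-1) ^+ ((n - 1) %/ 2) * qv%:F ^+ ((n ^ 2 - 1) %/ 4))
    ((1 - av * qv ^+ n) * (av - qv ^+ n)).
Proof.
set m := n./2.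
have hn : n = m.*2.+1 by have := odd_double_half n; rewrite hodd /= -/m; lia.
clearbody m.
set X := Xexpr n av qv.
set cq : {poly rat} := 'X ^+ n.
have hcq : qv ^+ n = cq%:P by rewrite /qv /cq rmorphXn.
have hqFn : qF ^+ n = cq%:G by rewrite /qF /cq rmorphXn.
have hqFn0 : qF ^+ n != 0 by rewrite expf_neq0 // qF_neq0.
have hz1 : ev (cq%:G) X = 0.
  by rewrite -hqFn /X ev_X // hn Sexpr_qn subrr mulr0.
have hz2 : ev ((qF ^+ n)^-1) X = 0.
  by rewrite /X ev_X ?invr_eq0 // Sexpr_inv // hn Sexpr_qn subrr mulr0.
have [Y hY] := root_step hz1.
have hzc : (qF ^+ n)^-1 * cq%:G = 1 by rewrite -hqFn mulVf.
have [d [W hW]] := @L_step cq ((qF ^+ n)^-1) X hzc hz2.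
set P := (1 - av * qv ^+ n) * (av - qv ^+ n).
set Cc := cq%:P * W - (cq%:P) ^+ d * Y.
set E := ((cq%:P) ^+ 2 - 1) * (cq%:P) ^+ d.
have hPC : E * X = P * Cc.
  rewrite /E /P /Cc hcq.
  transitivity ((cq%:P * av - 1) * (cq%:P) ^+ d * X - cq%:P * (av - cq%:P) * ((cq%:P) ^+ d * X)).
    by ring.
  by rewrite hW hY; ring.
set D0 := av ^+ n.-1 * dd n qv.
have hEF : E%:F != 0.
  rewrite tofrac_eq0 /E; apply: mulf_neq0.
    rewrite -rmorphXn -polyC1 -rmorphB polyC_eq0 subr_eq0 /cq -exprM.
    by apply: Xpow_neq1; rewrite muln_gt0 hn0.
  apply: expf_neq0; rewrite polyC_eq0 /cq; apply: expf_neq0; by rewrite polyX_eq0.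
have hdd : (dd n qv)%:F != 0 by rewrite ddF /dd; apply: expf_neq0; exact: qvF_qpoch.
have hD0F : D0%:F != 0.
  rewrite /D0 rmorphM; apply: mulf_neq0; last exact: hdd.
  rewrite rmorphXn; apply: expf_neq0; exact: avF_neq0.
rewrite /qcong; exists Cc, (E * D0); split.
  rewrite -tofrac_eq0 rmorphM; apply: mulf_neq0; [exact: hEF | exact: hD0F].
split.
  move=> g hgD hgP.
  have hED0 : E * D0 != 0.
    by rewrite -tofrac_eq0 rmorphM; apply: mulf_neq0; [exact: hEF | exact: hD0F].
  have ddX : (dd n ('X : {poly rat}))%:P = dd n qv.
    by rewrite /dd rmorphXn qpoch_morph rmorphXn.
  have hED : E * D0 = av ^+ n.-1 * ((cq ^+ 2 - 1) * cq ^+ d * dd n ('X : {poly rat}))%:P.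
    by rewrite /E /D0 -ddX !polyCM polyCB polyC1 !rmorphXn; ring.
  have hy : (cq ^+ 2 - 1) * cq ^+ d * dd n ('X : {poly rat}) != 0.
    by apply: contraNneq hED0 => hy; rewrite hED hy polyC0 mulr0.
  apply: (@cop_ind n g n.-1 _ hy hgP); by rewrite -hED.
rewrite [(E * D0)%:F]rmorphM.
apply: (@field_fin _ X%:F _ D0%:F E%:F (P%:F * Cc%:F)); last exact: hD0F; last exact: hEF.
  rewrite /X RF_eq /D0 [(av ^+ _ * _)%:F]rmorphM; congr (_ * _ * _); by rewrite rmorphXn.
by rewrite -!rmorphM hPC.
Qed.
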